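(* Let $\mathbf{x}\in\mathcal{P}$, and let the quantities $\tilde x_{v,s,t}$, $r_{v,s,t}$, $J_{v,t}$ be computed by the SN dynamic programs using $\mathbf{x}$ as the ex ante solution. Then for every volunteer $v\in[V]$, $J_{v,1}\ge\frac{1}{2-q}f_v(\mathbf{x})$, where $q$ is the minimum discrete hazard rate of $g$.
   Context: Data: volunteers $[V]$, task types $[S]$, horizon $T$, $\lambda_{s,t}\ge0$ with $\sum_{s=1}^S\lambda_{s,t}\le1$ and $\lambda_{0,t}=1-\sum_{s=1}^S\lambda_{s,t}$, $p_{v,s}\in[0,1]$, a probability mass function $g$ on the positive integers with CDF $G(\tau)=\sum_{i\le\tau}g(i)$, $G(0)=0$. MDHR: $q=\min_{\tau\in\mathbb{N}}\frac{g(\tau)}{1-G(\tau-1)}$ (with $\frac00:=1$). $\mathcal{P}$: set of $\mathbf{x}\in\mathbb{R}^{V\times S\times T}$ with $0\le x_{v,s,t}\le1$ and $\sum_{\tau=1}^t\sum_{s=1}^S\lambda_{s,\tau}x_{v,s,\tau}(1-G(t-\tau))\le1$ for all $v,t$. $f_v(\mathbf{x})=\sum_{t=1}^T\sum_{s=1}^S\lambda_{s,t}\big(\prod_{u<v}(1-p_{u,s}x_{u,s,t})\big)p_{v,s}x_{v,s,t}$. SN dynamic programs with ex ante solution $\mathbf{x}$: for $v=1,\dots,V$ in order: $r_{v,s,t}=p_{v,s}\prod_{u=1}^{v-1}(1-\tilde x_{u,s,t}p_{u,s})$; $J_{v,T+1}=0$; for $t=T$ down to $1$: $\tilde x_{v,s,t}=x_{v,s,t}\,\mathbb{I}\{r_{v,s,t}+\sum_{\tau=t+1}^Tg(\tau-t)J_{v,\tau}\ge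 J_{v,t+1}\}$ for $s\in[S]$ (with $\tilde x_{v,0,t}=r_{v,0,t}=0$), and $J_{v,t}=\sum_{s=0}^S\lambda_{s,t}\big((1-\tilde x_{v,s,t})J_{v,t+1}+\tilde x_{v,s,t}(r_{v,s,t}+\sum_{\tau=t+1}^Tg(\tau-t)J_{v,\tau})\big)$. *)

(* Defs.v *)
From HB Require Import structures.
From mathcomp Require Import all_boot all_order all_algebra.
From mathcomp Require Import all_classical all_reals all_analysis.
Set Implicit Arguments. Unset Strict Implicit. Unset Printing Implicit Defensive.
Import Order.TTheory GRing.Theory Num.Theory.
Local Open Scope ring_scope.

(* Data: lam s t = lambda_{s,t}, p v s = p_{v,s},
   g i = g(i) (pmf on positive integers; g 0 is irrelevant),
   x v s t = x_{v,s,t}. *)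

Definition cdfG (R : realType) (g : nat -> R) (n : nat) : R :=
  \sum_(1 <= i < n.+1) g i.

Definition hazard (R : realType) (g : nat -> R) (tau : nat) : R :=
  let d := 1 - cdfG g tau.-1 in
  if (g tau == 0) && (d == 0) then 1 else g tau / d.

Definition mdhr (R : realType) (g : nat -> R) : R :=
  inf [set hazard g tau | tau in [set tau : nat | (0 < tau)%N]].

Definition lam0 (R : realType) (S : nat) (lam : nat -> nat -> R) (t : nat) : R :=
  1 - \sum_(1 <= s < S.+1) lam s t.
Definition lamE (R : realType) (S : nat) (lam : nat -> nat -> R) (s t : nat) : R :=
  if s == 0%N then lam0 S lam t else lam s t.

Definition in_P (R : realType) (V S T : nat) (lam : nat -> nat -> R)
    (g : nat -> R) (x : nat -> nat -> nat -> R) : Prop :=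
  (forall v s t, (1 <= v <= V)%N -> (1 <= s <= S)%N -> (1 <= t <= T)%N ->
     0 <= x v s t <= 1) /\
  (forall v t, (1 <= v <= V)%N -> (1 <= t <= T)%N ->
     \sum_(1 <= tau < t.+1) \sum_(1 <= s < S.+1)
        lam s tau * x v s tau * (1 - cdfG g (t - tau)%N) <= 1).

Definition f_v (R : realType) (S T : nat) (lam p : nat -> nat -> R)
    (x : nat -> nat -> nat -> R) (v : nat) : R :=
  \sum_(1 <= t < T.+1) \sum_(1 <= s < S.+1)
    lam s t * (\prod_(1 <= u < v) (1 - p u s * x u s t)) * p v s * x v s t.

Definition cont (R : realType) (T : nat) (g : nat -> R) (J : nat -> R) (t : nat) : R :=
  \sum_(t.+1 <= tau < T.+1) g (tau - t)%N * J tau.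

Definition rE (R : realType) (r : nat -> nat -> R) (s t : nat) : R :=
  if s == 0%N then 0 else r s t.

Definition xtil_J (R : realType) (T : nat) (g : nat -> R)
    (x : nat -> nat -> nat -> R) (v : nat) (r : nat -> nat -> R)
    (J : nat -> R) (s t : nat) : R :=
  if s == 0%N then 0
  else x v s t * (if J t.+1 <= r s t + cont T g J t then 1 else 0).

Definition Jstep (R : realType) (S T : nat) (lam : nat -> nat -> R) (g : nat -> R)
    (x : nat -> nat -> nat -> R) (v : nat) (r : nat -> nat -> R)
    (J : nat -> R) (t : nat) : R :=
  \sum_(0 <= s < S.+1) lamE S lam s t *
     ((1 - xtil_J T g x v r J s t) * J t.+1
      + xtil_J T g x v r J s t * (rE r s t + cont T g J t)).

(* backward induction: after n steps, the table holds J_{v,tau} for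
   tau >= T+1-n, with J_{v,tau} = 0 for tau > T (in particular J_{v,T+1} = 0) *)
Fixpoint Jtab (R : realType) (S T : nat) (lam : nat -> nat -> R) (g : nat -> R)
    (x : nat -> nat -> nat -> R) (v : nat) (r : nat -> nat -> R) (n : nat)
    : nat -> R :=
  match n with
  | 0 => fun _ => 0
  | n'.+1 =>
      let J := Jtab S T lam g x v r n' in
      fun tau => if tau == (T - n')%N then Jstep S T lam g x v r J (T - n')
                 else J tau
  end.

Definition Jv (R : realType) (S T : nat) (lam : nat -> nat -> R) (g : nat -> R)
    (x : nat -> nat -> nat -> R) (v : nat) (r : nat -> nat -> R) : nat -> R :=
  Jtab S T lam g x v r T.

Definition xtil (R : realType) (S T : nat) (lam : nat -> nat -> R) (g : nat -> R)
    (x : nat -> nat -> nat -> R) (v : nat) (r : nat -> nat -> R) (s t : nat) : R :=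
  xtil_J T g x v r (Jv S T lam g x v r) s t.

Fixpoint pre (R : realType) (S T : nat) (lam p : nat -> nat -> R) (g : nat -> R)
    (x : nat -> nat -> nat -> R) (n : nat) : nat -> nat -> R :=
  match n with
  | 0 => fun _ _ => 1
  | n'.+1 =>
      let P := pre S T lam p g x n' in
      let r := fun s t => p n'.+1 s * P s t in
      fun s t => P s t * (1 - xtil S T lam g x n'.+1 r s t * p n'.+1 s)
  end.

Definition rSN (R : realType) (S T : nat) (lam p : nat -> nat -> R) (g : nat -> R)
    (x : nat -> nat -> nat -> R) (v : nat) (s t : nat) : R :=
  p v s * pre S T lam p g x v.-1 s t.

Definition JSN (R : realType) (S T : nat) (lam p : nat -> nat -> R) (g : nat -> R)
    (x : nat -> nat -> nat -> R) (v t : nat) : R :=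
  Jv S T lam g x v (rSN S T lam p g x v) t.

Definition xtilSN (R : realType) (S T : nat) (lam p : nat -> nat -> R) (g : nat -> R)
    (x : nat -> nat -> nat -> R) (v s t : nat) : R :=
  xtil S T lam g x v (rSN S T lam p g x v) s t.

(* Main.v *)
Require Import Defs.
From HB Require Import structures.
From mathcomp Require Import all_boot all_order all_algebra.
From mathcomp Require Import all_classical all_reals all_analysis.
From mathcomp Require Import zify ring lra.
Import Order.TTheory GRing.Theory Num.Theory.
Import numFieldNormedType.Exports.
Local Open Scope classical_set_scope.
Local Open Scope ring_scope.

Lemma cdfG0 (R : realType) (g : nat -> R) : cdfG g 0 = 0.
Proof. by rewrite /cdfG big_geq. Qed.

Lemma cdfGS (R : realType) (g : nat -> R) (n : nat) : cdfG g n.+1 = cdfG g n + g n.+1.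
Proof. by rewrite /cdfG big_nat_recr. Qed.

Lemma tele (R : realType) (J : nat -> R) a n :
  \sum_(a <= k < (a + n)%N) (J k - J k.+1) = J a - J (a + n)%N.
Proof.
elim: n => [|n IH]; first by rewrite addn0 big_geq // subrr.
rewrite addnS big_nat_recr /=; last by lia.
rewrite IH; lra.
Qed.

Lemma sum_if_lt (R : realType) (F : nat -> R) k T :
  (1 <= k <= T.+1)%N ->
  \sum_(1 <= t < T.+1) (if (t < k)%N then F t else 0) = \sum_(1 <= t < k) F t.
Proof.
case/andP => h1 h2.
rewrite (big_cat_nat h1 h2) /=.
have -> : \sum_(k <= i < T.+1) (if (i < k)%N then F i else 0) = 0.
  rewrite big_nat_cond big1 // => i /andP[/andP[hk _] _]; by rewrite ltnNge hk.
rewrite addr0; by apply: eq_big_nat => i /andP[_ ->].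
Qed.

Lemma sum_if_gt (R : realType) (F : nat -> R) t T :
  (t <= T)%N ->
  \sum_(1 <= k < T.+1) (if (t < k)%N then F k else 0) = \sum_(t.+1 <= k < T.+1) F k.
Proof.
move=> h.
have h1 : (1 <= t.+1)%N by [].
have h2 : (t.+1 <= T.+1)%N by [].
rewrite (big_cat_nat h1 h2) /=.
have -> : \sum_(1 <= i < t.+1) (if (t < i)%N then F i else 0) = 0.
  rewrite big_nat_cond big1 // => i /andP[/andP[_ hk] _]; by rewrite ltnNge -ltnS hk.
rewrite add0r; by apply: eq_big_nat => i /andP[-> _].
Qed.

Lemma sbp (R : realType) (g : nat -> R) (J : nat -> R) t m :
  J t.+1 - J (t + m).+1 * (1 - cdfG g m)
    - \sum_(t.+1 <= tau < (t + m).+1) g (tau - t)%N * J tau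
  = \sum_(t.+1 <= k < (t + m).+1) (J k - J k.+1) * (1 - cdfG g (k - t)%N).
Proof.
elim: m => [|m IH].
  by rewrite addn0 !big_geq // cdfG0; lra.
rewrite addnS big_nat_recr /=; last by lia.
rewrite [in RHS]big_nat_recr /=; last by lia.
rewrite -IH.
have -> : ((t + m).+1 - t)%N = m.+1 by lia.
rewrite !(@cdfGS R g m).
move: (\sum_(t.+1 <= i < (t + m).+1) g (i - t)%N * J i) => X.
ring.
Qed.

Lemma core (R : realType) (T : nat) (g : nat -> R) (q : R) (Y A J : nat -> R)
 (hY : forall t, (1 <= t <= T)%N -> 0 <= Y t)
 (hJT : J T.+1 = 0)
 (hD0 : forall t, (1 <= t <= T)%N -> 0 <= J t - J t.+1)
 (hD : forall t, (1 <= t <= T)%N ->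
    A t + Y t * (cont T g J t - J t.+1) <= J t - J t.+1)
 (hC : forall t, (1 <= t <= T)%N ->
    \sum_(1 <= tau < t.+1) Y tau * (1 - cdfG g (t - tau)%N) <= 1)
 (hq : 0 <= 1 - q)
 (hH : forall m, (0 < m)%N -> 1 - cdfG g m <= (1 - q) * (1 - cdfG g m.-1)) :
 \sum_(1 <= t < T.+1) A t <= (2 - q) * J 1.
Proof.
pose B t := \sum_(t.+1 <= k < T.+1) (J k - J k.+1) * (1 - cdfG g (k - t)%N).
have hB t : (t <= T)%N -> J t.+1 - cont T g J t = B t.
  move=> ht; have := @sbp R g J t (T - t).
  rewrite (_ : (t + (T - t))%N = T); last by lia.
  by rewrite hJT mul0r subr0 => H; rewrite /B -H /cont.
have hTel : \sum_(1 <= t < T.+1) (J t - J t.+1) = J 1.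
  by have := @tele R J 1 T; rewrite add1n hJT subr0.
have step1 : \sum_(1 <= t < T.+1) A t <=
    \sum_(1 <= t < T.+1) ((J t - J t.+1) + Y t * B t).
  apply: ler_sum_nat => t ht.
  have := hD t ht; rewrite -hB; last by lia.
  move: (Y t) (cont T g J t) => y c; nra.
have step2 : \sum_(1 <= t < T.+1) Y t * B t <= (1 - q) * J 1.
  have -> : \sum_(1 <= t < T.+1) Y t * B t =
     \sum_(1 <= t < T.+1) \sum_(1 <= k < T.+1)
        (if (t < k)%N then (J k - J k.+1) * (Y t * (1 - cdfG g (k - t)%N)) else 0).
    apply: eq_big_nat => t ht.
    rewrite /B -(@sum_if_gt R _ t T); last by lia.
    rewrite mulr_sumr; apply: eq_bigr => k _; case: ifP => _; [ring | by rewrite mulr0].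
  rewrite exchange_big /=.
  rewrite -hTel mulr_sumr.
  apply: ler_sum_nat => k hk.
  have -> : \sum_(1 <= t < T.+1)
      (if (t < k)%N then (J k - J k.+1) * (Y t * (1 - cdfG g (k - t)%N)) else 0)
     = (J k - J k.+1) * \sum_(1 <= t < T.+1)
      (if (t < k)%N then (Y t * (1 - cdfG g (k - t)%N)) else 0).
    rewrite mulr_sumr; apply: eq_bigr => t _; case: ifP => _ //; by rewrite mulr0.
  rewrite [X in _ <= X]mulrC; apply: ler_wpM2l; first exact: hD0.
  apply: (@le_trans _ _ (\sum_(1 <= t < T.+1)
      (if (t < k)%N then (1 - q) * (Y t * (1 - cdfG g (k.-1 - t)%N)) else 0))).
    apply: ler_sum_nat => t ht; case: ifP => htk //.
    rewrite mulrCA; apply: ler_wpM2l; first by apply: hY; lia.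
    have := hH (k - t)%N; rewrite (_ : (k - t).-1 = (k.-1 - t)%N); last by lia.
    apply; lia.
  rewrite sum_if_lt; last by lia.
  rewrite -mulr_sumr -[X in _ <= X]mulr1; apply: ler_wpM2l => //.
  case: k hk => [|k] hk; first by lia.
  case: k hk => [|k] hk; first by rewrite big_geq.
  have := hC k.+1; rewrite /=; apply; lia.
rewrite big_split /= hTel in step1.
apply: (le_trans step1); lra.
Qed.

Lemma Jtab_out (R : realType) S T lam g x v (r : nat -> nat -> R) n tau :
  (T < tau)%N -> Jtab S T lam g x v r n tau = 0.
Proof.
move=> h; elim: n => //= n IH; case: eqP => [e|_]; [lia | exact IH].
Qed.

Lemma Jtab_stable (R : realType) S T lam g x v (r : nat -> nat -> R) k n tau :
  (T - n < tau)%N -> Jtab S T lam g x v r (n + k) tau = Jtab S T lam g x v r n tau.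
Proof.
move=> h; elim: k => [|k IH]; first by rewrite addn0.
rewrite addnS /=; case: eqP => e; [lia | exact: IH].
Qed.

Lemma Jstep_ext (R : realType) S T lam g x v (r : nat -> nat -> R) J1 J2 t :
  (forall tau, (t < tau)%N -> J1 tau = J2 tau) ->
  Jstep S T lam g x v r J1 t = Jstep S T lam g x v r J2 t.
Proof.
move=> h.
have e1 : J1 t.+1 = J2 t.+1 by apply: h.
have e2 : cont T g J1 t = cont T g J2 t.
  by apply: eq_big_nat => i hi; rewrite h //; lia.
by rewrite /Jstep /xtil_J e1 e2.
Qed.

Lemma Jfix (R : realType) S T lam g x v (r : nat -> nat -> R) t :
  (1 <= t <= T)%N ->
  Jv S T lam g x v r t = Jstep S T lam g x v r (Jv S T lam g x v r) t.
Proof.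
move=> ht; rewrite /Jv.
have := @Jtab_stable R S T lam g x v r (t.-1) (T - t).+1 t.
rewrite (_ : ((T - t).+1 + t.-1)%N = T); last by lia.
move=> ->; last by lia.
rewrite /= (_ : (T - (T - t))%N = t); last by lia.
rewrite eqxx; apply: Jstep_ext => tau htau.
have := @Jtab_stable R S T lam g x v r t (T - t) tau.
rewrite (_ : (T - t + t)%N = T); last by lia.
by move=> ->; last by lia.
Qed.

Lemma JT1 (R : realType) S T lam g x v (r : nat -> nat -> R) :
  Jv S T lam g x v r T.+1 = 0.
Proof. by apply: Jtab_out. Qed.

Lemma G_le1 (R : realType) (g : nat -> R)
  (Hg : forall i, (0 < i)%N -> 0 <= g i) (Hg1 : cdfG g @ \oo --> (1 : R)) n :
  cdfG g n <= 1.
Proof.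
have hom : {homo cdfG g : a b / (a <= b)%N >-> a <= b}.
  move=> a b hab; rewrite /cdfG [X in _ <= X](@big_cat_nat _ _ _ a.+1) //= ?ltnS //.
  rewrite lerDl big_nat_cond; apply: sumr_ge0 => i /andP[/andP[h _] _]; apply: Hg; lia.
have := nondecreasing_cvgn_le hom (cvgP _ Hg1) n.
by rewrite (cvg_lim _ Hg1).
Qed.

Lemma hazard_props (R : realType) (g : nat -> R)
  (Hg : forall i, (0 < i)%N -> 0 <= g i) (Hg1 : cdfG g @ \oo --> (1 : R)) :
  0 <= 1 - mdhr g /\
  forall m, (0 < m)%N -> 1 - cdfG g m <= (1 - mdhr g) * (1 - cdfG g m.-1).
Proof.
have Gle := @G_le1 R g Hg Hg1.
have hz0 tau : (0 < tau)%N -> 0 <= hazard g tau.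
  move=> ht; rewrite /hazard; case: ifP => _ //.
  by apply: divr_ge0; [exact: Hg | rewrite subr_ge0].
have hle tau : (0 < tau)%N -> mdhr g <= hazard g tau.
  move=> ht; apply: ge_inf; last by exists tau.
  by exists 0 => y [t ht' <-]; exact: hz0.
have H1 m : (0 < m)%N -> mdhr g * (1 - cdfG g m.-1) <= g m.
  move=> hm; have d0 : 0 <= 1 - cdfG g m.-1 by rewrite subr_ge0.
  have := hle m hm; rewrite /hazard.
  case: (eqVneq (1 - cdfG g m.-1) 0) => [->|dn0].
    by rewrite mulr0 => _; exact: Hg.
  rewrite andbF => h.
  have dp : 0 < 1 - cdfG g m.-1 by rewrite lt_def dn0 d0.
  by rewrite -ler_pdivlMr.
split.
  have := H1 1%N isT; rewrite /= cdfG0 subr0 mulr1.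
  have := Gle 1%N; rewrite cdfGS cdfG0 add0r; lra.
move=> m hm; have := H1 m hm.
case: m hm => [//|m] _ /=; rewrite cdfGS.
set q := mdhr g; set G := cdfG g m; nra.
Qed.

Lemma Jstep_bound (R : realType) (S T : nat) (lam : nat -> nat -> R) (g : nat -> R) (x : nat -> nat -> nat -> R) (v : nat) (r : nat -> nat -> R) (J : nat -> R) (t : nat)
  (hlam : forall s, (1 <= s <= S)%N -> 0 <= lam s t)
  (hx : forall s, (1 <= s <= S)%N -> 0 <= x v s t) :
  0 <= Jstep S T lam g x v r J t - J t.+1 /\
  \sum_(1 <= s < S.+1) lam s t * x v s t * r s t
    + (\sum_(1 <= s < S.+1) lam s t * x v s t) * (cont T g J t - J t.+1)
  <= Jstep S T lam g x v r J t - J t.+1.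
Proof.
set c := cont T g J t.
have E : Jstep S T lam g x v r J t - J t.+1 =
   \sum_(1 <= s < S.+1) lam s t * (xtil_J T g x v r J s t * (r s t + c - J t.+1)).
  rewrite /Jstep big_ltn //.
  have -> : \sum_(1 <= s < S.+1) lamE S lam s t *
      ((1 - xtil_J T g x v r J s t) * J t.+1 + xtil_J T g x v r J s t * (rE r s t + cont T g J t))
    = \sum_(1 <= s < S.+1) (lam s t * J t.+1 +
        lam s t * (xtil_J T g x v r J s t * (r s t + c - J t.+1))).
    apply: eq_big_nat => s; case: s => [//|s] _; rewrite /lamE /rE /c /=; ring.
  rewrite big_split /= -mulr_suml /lamE /lam0 /xtil_J /rE /=.
  move: (\sum_(1 <= i < S.+1) lam i t) => L.
  move: (\sum_(1 <= i < S.+1) lam i t * _) => X.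
  ring.
rewrite E; split.
  rewrite big_nat_cond; apply: sumr_ge0 => s /andP[hs _].
  case: s hs => [//|s] hs; rewrite /xtil_J /=.
  case: ifP => h.
    rewrite mulr1; apply: mulr_ge0; first exact: hlam.
    apply: mulr_ge0; first exact: hx.
    by rewrite /c subr_ge0.
  by rewrite mulr0 mul0r mulr0.
rewrite mulr_suml -big_split /=.
apply: ler_sum_nat => s hs.
case: s hs => [//|s] hs; rewrite /xtil_J /=.
case: ifP => h.
  rewrite mulr1 /c le_eqVlt; apply/orP; left; apply/eqP; ring.
rewrite mulr0 mul0r mulr0.
move/negbT: h; rewrite -ltNge => h.
have hl := hlam _ hs; have hxx := hx _ hs.
rewrite -mulrDr; apply: mulr_ge0_le0; first exact: mulr_ge0.
rewrite /c; lra.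
Qed.

Lemma pre_ge (R : realType) (V S T : nat) (lam p : nat -> nat -> R) (g : nat -> R) (x : nat -> nat -> nat -> R)
  (Hx : forall v s t, (1 <= v <= V)%N -> (1 <= s <= S)%N -> (1 <= t <= T)%N ->
     0 <= x v s t <= 1)
  (Hp : forall v s, (1 <= v <= V)%N -> (1 <= s <= S)%N -> 0 <= p v s <= 1)
  n s t : (n <= V)%N -> (1 <= s <= S)%N -> (1 <= t <= T)%N ->
  0 <= \prod_(1 <= u < n.+1) (1 - p u s * x u s t) <= pre S T lam p g x n s t.
Proof.
move=> + hs ht; elim: n => [|n IH] hn.
  by rewrite big_geq //= ler01 lexx.
case/andP: (IH (ltnW hn)) => h0 h1.
rewrite big_nat_recr //=.
have hv1 : (1 <= n.+1 <= V)%N by lia.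
case/andP: (Hp n.+1 s hv1 hs) => p0 p1.
case/andP: (Hx n.+1 s t hv1 hs ht) => x0 x1.
have px1 : p n.+1 s * x n.+1 s t <= 1 by apply: mulr_ile1.
have px0 : 0 <= p n.+1 s * x n.+1 s t by apply: mulr_ge0.
have hpx : 0 <= 1 - p n.+1 s * x n.+1 s t by rewrite subr_ge0.
have hx' : 1 - p n.+1 s * x n.+1 s t <=
   1 - xtil S T lam g x n.+1 (fun s0 t0 => p n.+1 s0 * pre S T lam p g x n s0 t0) s t * p n.+1 s.
  rewrite /xtil /xtil_J.
  rewrite (_ : (s == 0%N) = false); last by case: (s) hs.
  case: ifP => _.
    by rewrite mulr1 mulrC lexx.
  rewrite mulr0 mul0r subr0 lerBlDr lerDl; exact: mulr_ge0.
apply/andP; split; first exact: mulr_ge0.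
exact: ler_pM.
Qed.

Theorem lemma3 (R : realType) (V S T : nat)
    (lam p : nat -> nat -> R) (g : nat -> R) (x : nat -> nat -> nat -> R)
    (Hlam : forall s t, (1 <= s <= S)%N -> (1 <= t <= T)%N -> 0 <= lam s t)
    (Hlam1 : forall t, (1 <= t <= T)%N -> \sum_(1 <= s < S.+1) lam s t <= 1)
    (Hp : forall v s, (1 <= v <= V)%N -> (1 <= s <= S)%N -> 0 <= p v s <= 1)
    (Hg : forall i, (0 < i)%N -> 0 <= g i)
    (Hg1 : cdfG g @ \oo --> (1 : R))
    (HxP : in_P V S T lam g x) :
  forall v, (1 <= v <= V)%N ->
    (2 - mdhr g)^-1 * f_v S T lam p x v <= JSN S T lam p g x v 1.
Proof.
move=> v hv.
have [hq hH] := @hazard_props R g Hg Hg1.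
case: HxP => Hx HC.
rewrite /JSN.
set r := rSN S T lam p g x v.
set J := Jv S T lam g x v r.
pose Y t := \sum_(1 <= s < S.+1) lam s t * x v s t.
pose A t := \sum_(1 <= s < S.+1) lam s t * x v s t * r s t.
have hx0 s t : (1 <= s <= S)%N -> (1 <= t <= T)%N -> 0 <= x v s t.
  by move=> hs ht; case/andP: (Hx v s t hv hs ht).
have hfA : f_v S T lam p x v <= \sum_(1 <= t < T.+1) A t.
  apply: ler_sum_nat => t ht; apply: ler_sum_nat => s hs.
  have hvV : (v.-1 <= V)%N by lia.
  case/andP: (@pre_ge R V S T lam p g x Hx Hp v.-1 s t hvV hs ht) => h0 h1.
  rewrite (_ : v.-1.+1 = v) in h0 h1; last by lia.
  case/andP: (Hp v s hv hs) => p0 _.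
  have hl := Hlam s t hs ht; have hxx := hx0 s t hs ht.
  rewrite /r /rSN.
  rewrite (_ : lam s t * \prod_(1 <= u < v) (1 - p u s * x u s t) * p v s * x v s t
             = (lam s t * x v s t * p v s) * \prod_(1 <= u < v) (1 - p u s * x u s t));
    last by ring.
  rewrite (_ : lam s t * x v s t * (p v s * pre S T lam p g x v.-1 s t)
             = (lam s t * x v s t * p v s) * pre S T lam p g x v.-1 s t);
    last by ring.
  by apply: ler_wpM2l => //; apply: mulr_ge0 => //; apply: mulr_ge0.
have hJf t : (1 <= t <= T)%N -> J t = Jstep S T lam g x v r J t.
  by move=> ht; exact: Jfix.
have hcore : \sum_(1 <= t < T.+1) A t <= (2 - mdhr g) * J 1.
  apply: (@core R T g (mdhr g) Y A J) => //.
  - move=> t ht; rewrite /Y big_nat_cond; apply: sumr_ge0 => s /andP[hs _].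
    by apply: mulr_ge0; [exact: Hlam | exact: hx0].
  - exact: JT1.
  - move=> t ht; rewrite (hJf t ht).
    by case: (@Jstep_bound R S T lam g x v r J t (fun s hs => Hlam s t hs ht)
                 (fun s hs => hx0 s t hs ht)).
  - move=> t ht; rewrite (hJf t ht).
    by case: (@Jstep_bound R S T lam g x v r J t (fun s hs => Hlam s t hs ht)
                 (fun s hs => hx0 s t hs ht)).
  - move=> t ht; apply: le_trans (HC v t hv ht).
    rewrite le_eqVlt; apply/orP; left; apply/eqP; apply: eq_bigr => tau _.
    by rewrite /Y mulr_suml.
have q2 : 0 < 2 - mdhr g by lra.
rewrite ler_pdivrMl //.
exact: le_trans hfA hcore.
Qed.
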